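(* Let $\mathbf{PsTop}$ be the category of pseudotopological spaces, with cylinder $IX = X \times [0,1]$, $i_k(x) = (x,k)$ ($k=0,1$), $p : X\times[0,1]\to X$ the projection, initial object $\varnothing$ (the empty space), and $\mathrm{cof}$ the class of morphisms $i : B \to A$ having the homotopy extension property (defined below). Then $(\mathbf{PsTop}, I, \mathrm{cof}, \varnothing)$ is an $I$-category.
   Context: Pseudotopological spaces: a convergence space is a set $X$ with a relation between filters on $X$ and points (written $\lambda \to x$) such that $\lambda \to x$, $\lambda\subseteq\lambda'$ imply $\lambda'\to x$, and the principal ultrafilter $\dot x \to x$; it is pseudotopological iff $\lambda \to x$ holds exactly when every ultrafilter containing $\lambda$ converges to $x$. Continuous maps: $\lambda\to x$ implies $f(\lambda)\to f(x)$, where $f(\lambda)$ is the filter generated by images. $[0,1]$ has its topological convergence ($\lambda \to x$ iff $\lambda$ contains the neighbourhood filter of $x$); products and pushouts are the initial/final structures in $\mathbf{PsTop}$. Homotopy extension property of $i : B \to A$: for $k = 0$ and $k=1$, for every object $Y$ and morphisms $f : A \to Y$, $G : IB \to Y$ with $f \circ i = G \circ i_k$, there exists $H : IA \to Y$ with $H \circ i_k = f$ and $H \circ Ii = G$. An $I$-category is a tuple $(\mathcal{C}, \mathrm{cof}, (I,i_0,i_1,p), \varnothing)$ with $(I,i_0,i_1,p)$ a cylinder (functor $I$, natural transformations $i_0,i_1 : \mathrm{Id} \to I$, $p : I \to \mathrm{Id}$, $p i_k = \mathrm{id}$), $\varnothing$ an initial object, satisfying: (1) Cylinder axiom: $I\varnothing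 = \varnothing$. (2) Pushout axiom: for a cofibration $i : B \to A$ and any $f : B \to X$ the pushout $A \cup_B X$ exists, the induced map $\bar i : X \to A\cup_B X$ is a cofibration, and $I$ carries this pushout to a pushout, $I(A\cup_B X) = IA \cup_{IB} IX$. (3) Cofibration axiom: isomorphisms are cofibrations; $\varnothing \to X$ is a cofibration for every $X$; composites of cofibrations are cofibrations; every cofibration has the homotopy extension property. (4) Interchange axiom: for every $X$ there is $T : IIX \to IIX$ with $T i_k = I i_k$ and $T I(i_k) = i_k$ for $k=0,1$. (5) Relative cylinder axiom: for a cofibration $i : B \to A$, the map $j = (i_0, Ii, i_1) : A \cup_B IB \cup_B A \to IA$ induced from the pushout of $A \xleftarrow{i} B \xrightarrow{i_0} IB \xleftarrow{i_1} B \xrightarrow{i} A$ is a cofibration. *)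

(* Defs.v *)
(* Pseudotopological spaces, formalized unbundled:
   a "space" is a carrier with a convergence relation; objects of PsTop are
   spaces satisfying [is_pstop]; morphisms are functions satisfying [cont].
   Equalities of morphisms are stated pointwise. *)
From Stdlib Require Import Reals.
Open Scope R_scope.

Definition is_filter {X : Type} (F : (X -> Prop) -> Prop) : Prop :=
  F (fun _ => True) /\
  ~ F (fun _ => False) /\
  (forall A B : X -> Prop, F A -> (forall x, A x -> B x) -> F B) /\
  (forall A B : X -> Prop, F A -> F B -> F (fun x => A x /\ B x)).

Definition fsub {X : Type} (F G : (X -> Prop) -> Prop) : Prop :=
  forall A, F A -> G A.

Definition is_ultrafilter {X : Type} (U : (X -> Prop) -> Prop) : Prop :=
  is_filter U /\ forall G, is_filter G -> fsub U G -> fsub G U.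

Definition principal {X : Type} (x : X) : (X -> Prop) -> Prop :=
  fun A => A x.

Definition fimg {X Y : Type} (f : X -> Y) (F : (X -> Prop) -> Prop)
  : (Y -> Prop) -> Prop :=
  fun B => exists A, F A /\ forall x, A x -> B (f x).

Record space := Space {
  pt : Type;
  cv : ((pt -> Prop) -> Prop) -> pt -> Prop
}.

Definition is_pstop (X : space) : Prop :=
  (forall F x, cv X F x -> is_filter F) /\
  (forall F G x, cv X F x -> is_filter G -> fsub F G -> cv X G x) /\
  (forall x, cv X (principal x) x) /\
  (forall F x, is_filter F ->
     (cv X F x <-> forall U, is_ultrafilter U -> fsub F U -> cv X U x)).

Definition cont (X Y : space) (f : pt X -> pt Y) : Prop :=
  forall F x, cv X F x -> cv Y (fimg f F) (f x).

Definition is_iso (X Y : space) (f : pt X -> pt Y) : Prop :=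
  cont X Y f /\ exists g : pt Y -> pt X, cont Y X g /\
    (forall x, g (f x) = x) /\ (forall y, f (g y) = y).

Definition prod_space (X Y : space) : space :=
  Space (pt X * pt Y)%type
    (fun F p => is_filter F /\ cv X (fimg fst F) (fst p) /\ cv Y (fimg snd F) (snd p)).

Definition I01 : Type := { r : R | 0 <= r <= 1 }.

Definition nbhd01 (t : I01) (U : I01 -> Prop) : Prop :=
  exists eps, 0 < eps /\
    forall s : I01, Rabs (proj1_sig s - proj1_sig t) < eps -> U s.

Definition interval_space : space :=
  Space I01 (fun F t => is_filter F /\ forall U, nbhd01 t U -> F U).

Definition zero01 : I01 := exist _ 0 (conj (Rle_refl 0) Rle_0_1).
Definition one01 : I01 := exist _ 1 (conj Rle_0_1 (Rle_refl 1)).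

Definition empty_space : space := Space Empty_set (fun _ _ => False).
Definition empty_map (X : space) : pt empty_space -> pt X :=
  fun e => match e with end.

(** the cylinder I X = X x [0,1], i_k, p and I on morphisms.
    k = false stands for 0, k = true for 1. *)
Definition cyl (X : space) : space := prod_space X interval_space.
Definition ik (k : bool) {X : space} : pt X -> pt (cyl X) :=
  fun x => (x, if k then one01 else zero01).
Definition cylp {X : space} : pt (cyl X) -> pt X := fst.
Definition cyl_map {X Y : space} (f : pt X -> pt Y) : pt (cyl X) -> pt (cyl Y) :=
  fun q => (f (fst q), snd q).

Definition is_initial (Z : space) : Prop :=
  forall Y : space, is_pstop Y ->
    (exists f : pt Z -> pt Y, cont Z Y f) /\
    (forall f g : pt Z -> pt Y, cont Z Y f -> cont Z Y g -> forall z, f z = g z).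

Definition HEP (B A : space) (i : pt B -> pt A) : Prop :=
  forall (k : bool) (Y : space), is_pstop Y ->
  forall (f : pt A -> pt Y) (G : pt (cyl B) -> pt Y),
    cont A Y f -> cont (cyl B) Y G ->
    (forall b, f (i b) = G (ik k b)) ->
    exists H : pt (cyl A) -> pt Y, cont (cyl A) Y H /\
      (forall a, H (ik k a) = f a) /\
      (forall q, H (cyl_map i q) = G q).

Definition cof (B A : space) (i : pt B -> pt A) : Prop :=
  cont B A i /\ HEP B A i.

Definition is_pushout (B A X P : space) (i : pt B -> pt A) (f : pt B -> pt X)
    (u : pt A -> pt P) (v : pt X -> pt P) : Prop :=
  is_pstop P /\ cont A P u /\ cont X P v /\ (forall b, u (i b) = v (f b)) /\
  forall Y : space, is_pstop Y ->
  forall (g : pt A -> pt Y) (h : pt X -> pt Y), cont A Y g -> cont X Y h ->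
    (forall b, g (i b) = h (f b)) ->
    exists k : pt P -> pt Y, cont P Y k /\
      (forall a, k (u a) = g a) /\ (forall x, k (v x) = h x) /\
      (forall k' : pt P -> pt Y, cont P Y k' ->
         (forall a, k' (u a) = g a) -> (forall x, k' (v x) = h x) ->
         forall p, k' p = k p).

(** colimit P of A <-i- B -i0-> IB <-i1- B -i-> A, written A ∪_B IB ∪_B A *)
Definition is_dpushout (B A P : space) (i : pt B -> pt A)
    (a0 : pt A -> pt P) (c : pt (cyl B) -> pt P) (a1 : pt A -> pt P) : Prop :=
  is_pstop P /\ cont A P a0 /\ cont (cyl B) P c /\ cont A P a1 /\
  (forall b, a0 (i b) = c (ik false b)) /\ (forall b, a1 (i b) = c (ik true b)) /\
  forall Y : space, is_pstop Y ->
  forall (g0 : pt A -> pt Y) (h : pt (cyl B) -> pt Y) (g1 : pt A -> pt Y),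
    cont A Y g0 -> cont (cyl B) Y h -> cont A Y g1 ->
    (forall b, g0 (i b) = h (ik false b)) -> (forall b, g1 (i b) = h (ik true b)) ->
    exists k : pt P -> pt Y, cont P Y k /\
      (forall a, k (a0 a) = g0 a) /\ (forall q, k (c q) = h q) /\
      (forall a, k (a1 a) = g1 a) /\
      (forall k' : pt P -> pt Y, cont P Y k' ->
         (forall a, k' (a0 a) = g0 a) -> (forall q, k' (c q) = h q) ->
         (forall a, k' (a1 a) = g1 a) -> forall p, k' p = k p).

(* Main.v *)
Require Import Defs.
From Stdlib Require Import Reals Lra Classical ProofIrrelevance FunctionalExtensionality PropExtensionality IndefiniteDescription.
From mathcomp Require filter classical_sets.
Open Scope R_scope.

Lemma ultra_ext {X : Type} (F : (X -> Prop) -> Prop) : is_filter F ->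
  exists U, is_ultrafilter U /\ fsub F U.
Proof.
  intros (HT & HN & HS & HI).
  assert (PF : filter.ProperFilter F).
  { constructor. exact HN. constructor. exact HT.
    intros A B. apply HI. intros P Q PQ FP. apply (HS P Q FP PQ). }
  destruct (filter.ultraFilterLemma PF) as [G [UG sub]].
  exists G. split; [|exact sub].
  destruct UG as [PG maxG].
  assert (FG : is_filter G).
  { destruct PG as [NG FG]. destruct FG as [TG IG SG].
    split; [exact TG|]. split; [exact NG|]. split.
    - intros A B GA AB. exact (SG A B AB GA).
    - intros A B GA GB. exact (IG A B GA GB). }
  split; [exact FG|].
  intros G' FG' sGG'.
  assert (PG' : filter.ProperFilter G').
  { destruct FG' as (T' & N' & S' & I').
    constructor. exact N'. constructor. exact T'.
    intros A B. apply I'. intros P Q PQ FP. apply (S' P Q FP PQ). }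
  pose proof (maxG G' PG' sGG') as E. rewrite E. intros A H; exact H.
Qed.

Lemma fT {X} {F : (X->Prop)->Prop} : is_filter F -> F (fun _ => True).
Proof. intros (a&b&c&d); exact a. Qed.
Lemma fN {X} {F : (X->Prop)->Prop} : is_filter F -> ~ F (fun _ => False).
Proof. intros (a&b&c&d); exact b. Qed.
Lemma fS {X} {F : (X->Prop)->Prop} : is_filter F -> forall A B : X -> Prop,
  F A -> (forall x, A x -> B x) -> F B.
Proof. intros (a&b&c&d); exact c. Qed.
Lemma fI {X} {F : (X->Prop)->Prop} : is_filter F -> forall A B : X -> Prop,
  F A -> F B -> F (fun x => A x /\ B x).
Proof. intros (a&b&c&d); exact d. Qed.
Lemma f_ne {X} {F : (X->Prop)->Prop} : is_filter F -> forall A, F A -> exists x, A x.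
Proof.
  intros HF A HA. apply NNPP. intro H. apply (fN HF).
  apply (fS HF A); auto. intros x Ax. apply H. exists x; auto.
Qed.
Lemma uf {X} {U : (X->Prop)->Prop} : is_ultrafilter U -> is_filter U.
Proof. intros [a b]; exact a. Qed.

Lemma ultra_compl {X} (U : (X->Prop)->Prop) : is_ultrafilter U ->
  forall A, U A \/ U (fun x => ~ A x).
Proof.
  intros [FU MU] A. destruct (classic (U A)) as [H|H]; [left; auto|right].
  set (G := fun B : X -> Prop => exists C, U C /\ forall x, C x -> ~ A x -> B x).
  assert (FG : is_filter G).
  { split; [|split; [|split]].
    - exists (fun _ => True); split; auto. apply (fT FU).
    - intros [C [UC HC]]. apply H. apply (fS FU C); auto.
      intros x Cx. apply NNPP. intro nA. exact (HC x Cx nA).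
    - intros B1 B2 [C [UC HC]] Hsub. exists C; split; auto.
    - intros B1 B2 [C1 [UC1 HC1]] [C2 [UC2 HC2]].
      exists (fun x => C1 x /\ C2 x); split; [apply (fI FU); auto|].
      intros x [c1 c2] nA; split; auto. }
  apply (MU G FG).
  - intros B UB. exists B; split; auto.
  - exists (fun _ => True); split; [apply (fT FU)|auto].
Qed.

Lemma ultra_or {X} (U : (X->Prop)->Prop) : is_ultrafilter U ->
  forall A B, U (fun x => A x \/ B x) -> U A \/ U B.
Proof.
  intros UU A B H. destruct (ultra_compl U UU A) as [HA|HA]; auto.
  right. apply (fS (uf UU) (fun x => (A x \/ B x) /\ ~ A x)).
  apply (fI (uf UU)); auto. intros x [[a|b] n]; tauto.
Qed.

Lemma fimg_filter {X Y} (f : X -> Y) F : is_filter F -> is_filter (fimg f F).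
Proof.
  intros HF. split; [|split; [|split]].
  - exists (fun _ => True); split; auto. apply (fT HF).
  - intros [A [FA HA]]. apply (fN HF). apply (fS HF A); auto.
  - intros A B [C [FC HC]] AB. exists C; split; auto.
  - intros A B [C [FC HC]] [D [FD HD]]. exists (fun x => C x /\ D x); split.
    apply (fI HF); auto. intros x [c d]; split; auto.
Qed.

Lemma fimg_comp1 {X Y Z} (f : X -> Y) (g : Y -> Z) F :
  fsub (fimg g (fimg f F)) (fimg (fun x => g (f x)) F).
Proof. intros B [A' [[A [FA HA]] HA']]. exists A; split; auto. Qed.
Lemma fimg_comp2 {X Y Z} (f : X -> Y) (g : Y -> Z) F :
  fsub (fimg (fun x => g (f x)) F) (fimg g (fimg f F)).
Proof. intros B [A [FA HA]]. exists (fun y => B (g y)); split; auto.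
  exists A; split; auto. Qed.
Lemma fimg_ext {X Y} (f g : X -> Y) F : (forall x, f x = g x) ->
  fsub (fimg f F) (fimg g F).
Proof. intros E B [A [FA HA]]. exists A; split; auto. intros x Ax; rewrite <- E; auto. Qed.
Lemma fimg_agree {X Y} (f g : X -> Y) F S : is_filter F -> F S ->
  (forall x, S x -> f x = g x) -> fsub (fimg f F) (fimg g F).
Proof. intros HF FS E B [A [FA HA]]. exists (fun x => A x /\ S x); split.
  apply (fI HF); auto. intros x [a s]; rewrite <- E; auto. Qed.
Lemma fimg_mono {X Y} (f : X -> Y) F G : fsub F G -> fsub (fimg f F) (fimg f G).
Proof. intros s B [A [FA HA]]. exists A; split; auto. Qed.
Lemma fsub_refl {X} (F : (X->Prop)->Prop) : fsub F F.
Proof. intros A H; exact H. Qed.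
Lemma fsub_trans {X} (F G H : (X->Prop)->Prop) : fsub F G -> fsub G H -> fsub F H.
Proof. intros a b A x; auto. Qed.

Lemma fimg_ultra {X Y} (f : X -> Y) U : is_ultrafilter U -> is_ultrafilter (fimg f U).
Proof.
  intros UU. split; [apply fimg_filter, (uf UU)|].
  intros G FG sub B GB.
  destruct (ultra_compl U UU (fun x => B (f x))) as [H|H].
  - exists (fun x => B (f x)); split; auto.
  - exfalso. apply (fN FG). apply (fS FG (fun y => B y /\ ~ B y)); [|tauto].
    apply (fI FG); auto. apply sub. exists (fun x => ~ B (f x)); split; auto.
Qed.

Lemma principal_filter {X} (x : X) : is_filter (principal x).
Proof. unfold principal. split; [|split; [|split]]; auto. Qed.

Lemma fimg_principal {X Y} (f : X -> Y) x :
  fsub (principal (f x)) (fimg f (principal x)).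
Proof. intros B Bf. exists (fun x => B (f x)); split; auto. Qed.

Lemma ultra_lift {X Y} (f : X -> Y) F W : is_filter F -> is_ultrafilter W ->
  fsub (fimg f F) W -> exists U, is_ultrafilter U /\ fsub F U /\ fsub (fimg f U) W.
Proof.
  intros HF UW sub.
  set (G := fun C : X -> Prop => exists A B, F A /\ W B /\ forall x, A x -> B (f x) -> C x).
  assert (FG : is_filter G).
  { split; [|split; [|split]].
    - exists (fun _ => True), (fun _ => True); split; [apply (fT HF)|split; [apply (fT (uf UW))|auto]].
    - intros [A [B [FA [WB H]]]].
      assert (WS : W (fun y => (exists x, A x /\ f x = y) /\ B y)).
      { apply (fI (uf UW)); auto. apply sub. exists A; split; auto. intros x Ax; exists x; auto. }
      destruct (f_ne (uf UW) _ WS) as [y [[x [Ax E]] By]]. subst y. exact (H x Ax By).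
    - intros C D [A [B [FA [WB H]]]] CD. exists A, B; auto.
    - intros C D [A [B [FA [WB H]]]] [A' [B' [FA' [WB' H']]]].
      exists (fun x => A x /\ A' x), (fun y => B y /\ B' y). split; [apply (fI HF); auto|].
      split; [apply (fI (uf UW)); auto|]. intros x [a a'] [b b']; split; auto. }
  destruct (ultra_ext G FG) as [U [UU sGU]]. exists U; split; auto. split.
  - intros A FA. apply sGU. exists A, (fun _ => True); split; auto. split; auto. apply (fT (uf UW)).
  - intros S [C [UC HC]]. destruct (ultra_compl W UW S) as [H|H]; auto. exfalso.
    assert (UN : U (fun x => ~ S (f x))).
    { apply sGU. exists (fun _ => True), (fun y => ~ S y); split; [apply (fT HF)|split; auto]. }
    apply (fN (uf UU)). apply (fS (uf UU) (fun x => C x /\ ~ S (f x))).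
    apply (fI (uf UU)); auto. intros x [c n]; exact (n (HC x c)).
Qed.

Lemma ps_filter {X} : is_pstop X -> forall F x, cv X F x -> is_filter F.
Proof. intros (a&b&c&d); exact a. Qed.
Lemma ps_up {X} : is_pstop X -> forall F G x, cv X F x -> is_filter G -> fsub F G -> cv X G x.
Proof. intros (a&b&c&d); exact b. Qed.
Lemma ps_pr {X} : is_pstop X -> forall x, cv X (principal x) x.
Proof. intros (a&b&c&d); exact c. Qed.
Lemma ps_ultra {X} : is_pstop X -> forall F x, is_filter F ->
     (cv X F x <-> forall U, is_ultrafilter U -> fsub F U -> cv X U x).
Proof. intros (a&b&c&d); exact d. Qed.

Lemma cont_by_ultra X Y (f : pt X -> pt Y) : is_pstop X -> is_pstop Y ->
  (forall U x, is_ultrafilter U -> cv X U x -> cv Y (fimg f U) (f x)) -> cont X Y f.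
Proof.
  intros PX PY H F x Fx. pose proof (ps_filter PX _ _ Fx) as FF.
  apply (ps_ultra PY); [apply fimg_filter; auto|].
  intros W UW sub. destruct (ultra_lift f F W FF UW sub) as [U [UU [sFU sUW]]].
  apply (ps_up PY (fimg f U)); auto. apply H; auto. apply (ps_up PX F); auto. apply (uf UU).
  apply (uf UW).
Qed.

Lemma cont_comp X Y Z (f : pt X -> pt Y) (g : pt Y -> pt Z) :
  is_pstop X -> is_pstop Z -> cont X Y f -> cont Y Z g -> cont X Z (fun x => g (f x)).
Proof.
  intros PX PZ cf cg F x Fx. apply (ps_up PZ (fimg g (fimg f F))).
  apply cg, cf, Fx. apply fimg_filter, (ps_filter PX _ _ Fx). apply fimg_comp1.
Qed.

Lemma cont_ext X Y (f g : pt X -> pt Y) : is_pstop X -> is_pstop Y ->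
  (forall x, f x = g x) -> cont X Y f -> cont X Y g.
Proof.
  intros PX PY E cf F x Fx. rewrite <- E. apply (ps_up PY (fimg f F)). auto.
  apply fimg_filter, (ps_filter PX _ _ Fx). apply fimg_ext; auto.
Qed.

Lemma cont_id X : is_pstop X -> cont X X (fun x => x).
Proof.
  intros PX F x Fx. apply (ps_up PX F); auto. apply fimg_filter, (ps_filter PX _ _ Fx).
  intros A FA. exists A; split; auto.
Qed.

Lemma cont_const X Y (y : pt Y) : is_pstop X -> is_pstop Y -> cont X Y (fun _ => y).
Proof.
  intros PX PY F x Fx. apply (ps_up PY (principal y)). apply (ps_pr PY).
  apply fimg_filter, (ps_filter PX _ _ Fx).
  intros B By. exists (fun _ => True); split; auto. apply (fT (ps_filter PX _ _ Fx)).
Qed.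

Lemma prod_pstop X Y : is_pstop X -> is_pstop Y -> is_pstop (prod_space X Y).
Proof.
  intros PX PY. split; [|split; [|split]].
  - intros F p [H _]; exact H.
  - intros F G p [HF [H1 H2]] FG sub. split; auto. split.
    apply (ps_up PX (fimg fst F)); auto. apply fimg_filter; auto. apply fimg_mono; auto.
    apply (ps_up PY (fimg snd F)); auto. apply fimg_filter; auto. apply fimg_mono; auto.
  - intros [x y]. split; [apply principal_filter|]. split.
    + apply (ps_up PX (principal x)). apply ps_pr; auto. apply fimg_filter, principal_filter.
      apply (fimg_principal fst (x,y)).
    + apply (ps_up PY (principal y)). apply ps_pr; auto. apply fimg_filter, principal_filter.
      apply (fimg_principal snd (x,y)).
  - intros F p HF. split.
    + intros [_ [H1 H2]] U UU sub. split; [apply (uf UU)|]. split.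
      apply (ps_up PX (fimg fst F)); auto. apply fimg_filter, (uf UU). apply fimg_mono; auto.
      apply (ps_up PY (fimg snd F)); auto. apply fimg_filter, (uf UU). apply fimg_mono; auto.
    + intros H. split; auto. split.
      * apply (ps_ultra PX); [apply fimg_filter; auto|].
        intros V UV sub. destruct (ultra_lift fst F V HF UV sub) as [U [UU [s1 s2]]].
        destruct (H U UU s1) as [_ [H1 _]]. apply (ps_up PX (fimg fst U)); auto. apply (uf UV).
      * apply (ps_ultra PY); [apply fimg_filter; auto|].
        intros V UV sub. destruct (ultra_lift snd F V HF UV sub) as [U [UU [s1 s2]]].
        destruct (H U UU s1) as [_ [_ H2]]. apply (ps_up PY (fimg snd U)); auto. apply (uf UV).
Qed.

Lemma cont_fst X Y : cont (prod_space X Y) X fst.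
Proof. intros F p [_ [H _]]; exact H. Qed.
Lemma cont_snd X Y : cont (prod_space X Y) Y snd.
Proof. intros F p [_ [_ H]]; exact H. Qed.

Lemma cont_pair Z X Y (g : pt Z -> pt X) (h : pt Z -> pt Y) :
  is_pstop Z -> is_pstop X -> is_pstop Y -> cont Z X g -> cont Z Y h ->
  cont Z (prod_space X Y) (fun z => (g z, h z)).
Proof.
  intros PZ PX PY cg ch F z Fz. pose proof (ps_filter PZ _ _ Fz) as HF.
  split; [apply fimg_filter; auto|]. split; simpl.
  - apply (ps_up PX (fimg g F)); auto. apply fimg_filter, fimg_filter; auto.
    intros B HB. apply (fimg_comp2 (fun z => (g z, h z)) fst). exact HB.
  - apply (ps_up PY (fimg h F)); auto. apply fimg_filter, fimg_filter; auto.
    intros B HB. apply (fimg_comp2 (fun z => (g z, h z)) snd). exact HB.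
Qed.

Lemma I01_eq (a b : I01) : proj1_sig a = proj1_sig b -> a = b.
Proof. destruct a as [a pa], b as [b pb]; simpl; intros E; subst b. f_equal; apply proof_irrelevance. Qed.

Lemma interval_pstop : is_pstop interval_space.
Proof.
  split; [|split; [|split]].
  - intros F t [H _]; exact H.
  - intros F G t [HF H] FG sub. split; auto.
  - intros t. split; [apply principal_filter|]. intros U [eps [ep H]]. apply H.
    unfold Rminus; rewrite Rplus_opp_r, Rabs_R0; auto.
  - intros F t HF. split.
    + intros [_ H] U UU sub. split; [apply (uf UU)|]. auto.
    + intros H. split; auto. intros U0 N0. apply NNPP; intros nF.
      set (G := fun B : I01 -> Prop => exists A, F A /\ forall x, A x -> ~ U0 x -> B x).
      assert (FG : is_filter G).
      { split; [|split; [|split]].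
        - exists (fun _ => True); split; auto. apply (fT HF).
        - intros [A [FA HA]]. apply nF. apply (fS HF A); auto.
          intros x Ax. apply NNPP; intro n; exact (HA x Ax n).
        - intros B1 B2 [A [FA HA]] s. exists A; split; auto.
        - intros B1 B2 [A [FA HA]] [A' [FA' HA']]. exists (fun x => A x /\ A' x); split.
          apply (fI HF); auto. intros x [a a'] n; split; auto. }
      destruct (ultra_ext G FG) as [W [UW sGW]].
      assert (sFW : fsub F W). { intros A FA. apply sGW. exists A; split; auto. }
      destruct (H W UW sFW) as [_ HW]. apply (fN (uf UW)).
      apply (fS (uf UW) (fun x => U0 x /\ ~ U0 x)); [|tauto]. apply (fI (uf UW)); auto.
      apply sGW. exists (fun _ => True); split; auto. apply (fT HF).
Qed.

Definition rcont (Z : space) (h : pt Z -> R) : Prop :=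
  forall F z, cv Z F z -> forall eps, 0 < eps -> F (fun z' => Rabs (h z' - h z) < eps).

Lemma cont_I (Z : space) (h : pt Z -> I01) : is_pstop Z ->
  rcont Z (fun z => proj1_sig (h z)) -> cont Z interval_space h.
Proof.
  intros PZ H F z Fz. split; [apply fimg_filter, (ps_filter PZ _ _ Fz)|].
  intros U [eps [ep HU]]. exists (fun z' => Rabs (proj1_sig (h z') - proj1_sig (h z)) < eps).
  split; [apply H; auto|]. intros x Hx; apply HU; exact Hx.
Qed.

Lemma rcont_I (Z : space) (h : pt Z -> I01) : is_pstop Z ->
  cont Z interval_space h -> rcont Z (fun z => proj1_sig (h z)).
Proof.
  intros PZ ch F z Fz eps ep. destruct (ch F z Fz) as [_ H].
  destruct (H (fun s => Rabs (proj1_sig s - proj1_sig (h z)) < eps)) as [A [FA HA]].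
  exists eps; split; auto. apply (fS (ps_filter PZ _ _ Fz) A); auto.
Qed.

Lemma rcont_comp (Z W : space) (g : pt Z -> pt W) (h : pt W -> R) :
  is_pstop Z -> cont Z W g -> rcont W h -> rcont Z (fun z => h (g z)).
Proof.
  intros PZ cg ch F z Fz eps ep. destruct (ch _ _ (cg F z Fz) eps ep) as [A [FA HA]].
  apply (fS (ps_filter PZ _ _ Fz) A); auto.
Qed.

Lemma rcont_const Z c : is_pstop Z -> rcont Z (fun _ => c).
Proof. intros PZ F z Fz eps ep. apply (fS (ps_filter PZ _ _ Fz) (fun _ => True)).
  apply (fT (ps_filter PZ _ _ Fz)). intros; unfold Rminus; rewrite Rplus_opp_r, Rabs_R0; auto. Qed.

Lemma rcont_plus Z h1 h2 : is_pstop Z -> rcont Z h1 -> rcont Z h2 -> rcont Z (fun z => h1 z + h2 z).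
Proof.
  intros PZ c1 c2 F z Fz eps ep.
  apply (fS (ps_filter PZ _ _ Fz) (fun z' => Rabs (h1 z' - h1 z) < eps/2 /\ Rabs (h2 z' - h2 z) < eps/2)).
  apply (fI (ps_filter PZ _ _ Fz)); [apply c1|apply c2]; auto; lra.
  intros x [a b]. replace (h1 x + h2 x - (h1 z + h2 z)) with ((h1 x - h1 z) + (h2 x - h2 z)) by ring.
  eapply Rle_lt_trans; [apply Rabs_triang|lra].
Qed.

Lemma rcont_scal Z c h : is_pstop Z -> rcont Z h -> rcont Z (fun z => c * h z).
Proof.
  intros PZ ch F z Fz eps ep.
  apply (fS (ps_filter PZ _ _ Fz) (fun z' => Rabs (h z' - h z) < eps / (Rabs c + 1))).
  apply ch; auto. apply Rdiv_lt_0_compat; auto. pose proof (Rabs_pos c); lra.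
  intros x H. replace (c * h x - c * h z) with (c * (h x - h z)) by ring.
  rewrite Rabs_mult. pose proof (Rabs_pos c). pose proof (Rabs_pos (h x - h z)).
  apply Rmult_lt_compat_r with (r := Rabs c + 1) in H; [|lra].
  unfold Rdiv in H. rewrite Rmult_assoc, Rinv_l, Rmult_1_r in H by lra. nra.
Qed.

Lemma rcont_max Z h1 h2 : is_pstop Z -> rcont Z h1 -> rcont Z h2 -> rcont Z (fun z => Rmax (h1 z) (h2 z)).
Proof.
  intros PZ c1 c2 F z Fz eps ep.
  apply (fS (ps_filter PZ _ _ Fz) (fun z' => Rabs (h1 z' - h1 z) < eps /\ Rabs (h2 z' - h2 z) < eps)).
  apply (fI (ps_filter PZ _ _ Fz)); [apply c1|apply c2]; auto.
  intros x [a b]. revert a b. unfold Rmax. repeat destruct Rle_dec; intros a b;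
  apply Rabs_def2 in a; apply Rabs_def2 in b; apply Rabs_def1; lra.
Qed.

Lemma rcont_min Z h1 h2 : is_pstop Z -> rcont Z h1 -> rcont Z h2 -> rcont Z (fun z => Rmin (h1 z) (h2 z)).
Proof.
  intros PZ c1 c2 F z Fz eps ep.
  apply (fS (ps_filter PZ _ _ Fz) (fun z' => Rabs (h1 z' - h1 z) < eps /\ Rabs (h2 z' - h2 z) < eps)).
  apply (fI (ps_filter PZ _ _ Fz)); [apply c1|apply c2]; auto.
  intros x [a b]. revert a b. unfold Rmin. repeat destruct Rle_dec; intros a b;
  apply Rabs_def2 in a; apply Rabs_def2 in b; apply Rabs_def1; lra.
Qed.

Lemma rcont_abs Z h : is_pstop Z -> rcont Z h -> rcont Z (fun z => Rabs (h z)).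
Proof.
  intros PZ ch F z Fz eps ep. apply (fS (ps_filter PZ _ _ Fz) _ _ (ch F z Fz eps ep)).
  intros x H. eapply Rle_lt_trans; [apply Rabs_triang_inv2|exact H].
Qed.


From Stdlib Require Import Reals Lra Classical ProofIrrelevance FunctionalExtensionality PropExtensionality IndefiniteDescription.
Open Scope R_scope.

Lemma cyl_pstop X : is_pstop X -> is_pstop (cyl X).
Proof. intros PX. apply prod_pstop; auto. apply interval_pstop. Qed.

Lemma cont_ik k X : is_pstop X -> cont X (cyl X) (ik k).
Proof.
  intros PX. unfold ik. apply (cont_pair X X interval_space (fun x => x) (fun _ => if k then one01 else zero01)); auto.
  apply interval_pstop. apply cont_id; auto. apply cont_const; auto. apply interval_pstop.
Qed.

Lemma cont_cylp X : cont (cyl X) X cylp.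
Proof. apply cont_fst. Qed.

Lemma cont_cyl_map X Y f : is_pstop X -> is_pstop Y -> cont X Y f -> cont (cyl X) (cyl Y) (cyl_map f).
Proof.
  intros PX PY cf. unfold cyl_map.
  apply (cont_pair (cyl X) Y interval_space (fun q => f (fst q)) snd).
  apply cyl_pstop; auto. auto. apply interval_pstop.
  apply cont_comp; auto. apply cyl_pstop; auto. apply cont_fst. apply cont_snd.
Qed.

Lemma empty_pstop : is_pstop empty_space.
Proof.
  split; [|split; [|split]]; simpl; try tauto; intros x; destruct x.
Qed.

Lemma empty_initial : is_initial empty_space.
Proof.
  intros Y PY. split. exists (empty_map Y). intros F x; destruct x.
  intros f g _ _ z; destruct z.
Qed.

Lemma cyl_empty_initial : is_initial (cyl empty_space).
Proof.
  intros Y PY. split. exists (fun q => empty_map Y (fst q)). intros F [e s]; destruct e.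
  intros f g _ _ [e s]; destruct e.
Qed.

Lemma iso_cof X Y f : is_pstop X -> is_pstop Y -> is_iso X Y f -> cof X Y f.
Proof.
  intros PX PY [cf [g [cg [gf fg]]]]. split; auto.
  intros k Z PZ F G cF cG E. exists (fun q => G (cyl_map g q)). split; [|split].
  - apply cont_comp; auto. apply cyl_pstop; auto. apply cont_cyl_map; auto.
  - intros a. unfold cyl_map, ik; simpl. rewrite <- (fg a) at 2. rewrite E. reflexivity.
  - intros [x s]. unfold cyl_map; simpl. rewrite gf. reflexivity.
Qed.

Lemma empty_cof X : is_pstop X -> cof empty_space X (empty_map X).
Proof.
  intros PX. split. intros F x; destruct x.
  intros k Y PY f G cf cG E. exists (fun q => f (fst q)). split; [|split].
  - apply cont_comp; auto. apply cyl_pstop; auto. apply cont_fst.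
  - intros a; reflexivity.
  - intros [e s]; destruct e.
Qed.

Lemma comp_cof X Y Z f g : is_pstop X -> is_pstop Y -> is_pstop Z ->
  cof X Y f -> cof Y Z g -> cof X Z (fun x => g (f x)).
Proof.
  intros PX PY PZ [cf hf] [cg hg]. split. apply cont_comp; auto.
  intros k W PW F G cF cG E.
  assert (cFg : cont Y W (fun y => F (g y))) by (apply cont_comp; auto).
  destruct (hf k W PW (fun y => F (g y)) G cFg cG E) as [H1 [c1 [e1 e1']]].
  assert (E2 : forall y, F (g y) = H1 (ik k y)) by (intros y; rewrite e1; reflexivity).
  destruct (hg k W PW F H1 cF c1 E2) as [H2 [c2 [e2 e2']]].
  exists H2. split; [auto|split; auto]. intros q. rewrite <- e1'. rewrite <- e2'. reflexivity.
Qed.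

Lemma interchange X : is_pstop X ->
  exists T : pt (cyl (cyl X)) -> pt (cyl (cyl X)),
    cont (cyl (cyl X)) (cyl (cyl X)) T /\
    forall k : bool,
      (forall q : pt (cyl X), T (ik k q) = cyl_map (ik k) q) /\
      (forall q : pt (cyl X), T (cyl_map (ik k) q) = ik k q).
Proof.
  intros PX. exists (fun p => ((fst (fst p), snd p), snd (fst p))). split.
  - assert (P1 := cyl_pstop _ PX). assert (P2 := cyl_pstop _ P1). pose proof interval_pstop as PI.
    apply (cont_pair (cyl (cyl X)) (cyl X) interval_space); auto.
    apply (cont_pair (cyl (cyl X)) X interval_space); auto.
    apply (cont_comp _ (cyl X)); auto; apply cont_fst.
    apply cont_snd.
    apply (cont_comp _ (cyl X)); auto; [apply cont_fst|apply cont_snd].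
  - intros k; split; intros [x s]; reflexivity.
Qed.

From Stdlib Require Import Reals Lra Classical ProofIrrelevance FunctionalExtensionality PropExtensionality IndefiniteDescription.
Open Scope R_scope.

Inductive eqc {S : Type} (R : S -> S -> Prop) : S -> S -> Prop :=
| eqc_base x y : R x y -> eqc R x y
| eqc_refl x : eqc R x x
| eqc_sym x y : eqc R x y -> eqc R y x
| eqc_trans x y z : eqc R x y -> eqc R y z -> eqc R x z.

Definition gS (X1 X2 X3 : space) : Type := ((pt X1 + pt X2) + pt X3)%type.
Definition gQ (X1 X2 X3 : space) (R : gS X1 X2 X3 -> gS X1 X2 X3 -> Prop) : Type :=
  { C : gS X1 X2 X3 -> Prop | exists s, C = eqc R s }.

Definition cls {X1 X2 X3 : space} (R : gS X1 X2 X3 -> gS X1 X2 X3 -> Prop)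
  (s : gS X1 X2 X3) : gQ X1 X2 X3 R := exist _ (eqc R s) (ex_intro _ s eq_refl).

Definition in1 {X1 X2 X3 : space} (x : pt X1) : gS X1 X2 X3 := inl (inl x).
Definition in2 {X1 X2 X3 : space} (x : pt X2) : gS X1 X2 X3 := inl (inr x).
Definition in3 {X1 X2 X3 : space} (x : pt X3) : gS X1 X2 X3 := inr x.

Definition chart_cv {Q S : Type} (cl : S -> Q) (X : space) (e : pt X -> S)
  (F : (Q -> Prop) -> Prop) (q : Q) : Prop :=
  exists G x, cv X G x /\ cl (e x) = q /\ fsub (fimg (fun y => cl (e y)) G) F.

Definition gcv0 X1 X2 X3 R (F : (gQ X1 X2 X3 R -> Prop) -> Prop) q : Prop :=
  chart_cv (cls R) X1 in1 F q \/ chart_cv (cls R) X2 in2 F q \/ chart_cv (cls R) X3 in3 F q.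

Definition glue X1 X2 X3 R : space :=
  Space (gQ X1 X2 X3 R) (fun F q => is_filter F /\
     forall U, is_ultrafilter U -> fsub F U -> gcv0 X1 X2 X3 R U q).

Lemma cls_eq {X1 X2 X3 R} (s s' : gS X1 X2 X3) : eqc R s s' -> cls R s = cls R s'.
Proof.
  intros H. unfold cls. apply subset_eq_compat. apply functional_extensionality; intros x.
  apply propositional_extensionality; split; intros H'.
  - eapply eqc_trans; [apply eqc_sym; exact H|exact H'].
  - eapply eqc_trans; [exact H|exact H'].
Qed.

Lemma cls_inv {X1 X2 X3 R} (s s' : gS X1 X2 X3) : cls R s = cls R s' -> eqc R s s'.
Proof.
  intros H. apply (f_equal (@proj1_sig _ _)) in H. simpl in H. rewrite H. apply eqc_refl.
Qed.

Lemma cls_surj {X1 X2 X3 R} (q : gQ X1 X2 X3 R) : exists s, q = cls R s.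
Proof. destruct q as [C [s E]]. exists s. subst C. unfold cls. apply subset_eq_compat. reflexivity. Qed.

Definition rep {X1 X2 X3 R} (q : gQ X1 X2 X3 R) : gS X1 X2 X3 :=
  proj1_sig (constructive_indefinite_description _ (proj2_sig q)).

Lemma rep_cls {X1 X2 X3 R} (s : gS X1 X2 X3) : eqc R s (rep (cls R s)).
Proof.
  unfold rep. destruct (constructive_indefinite_description _ _) as [s' E]. simpl in *.
  rewrite E. apply eqc_refl.
Qed.

Lemma descend {S T : Type} (R : S -> S -> Prop) (g : S -> T) :
  (forall s s', R s s' -> g s = g s') -> forall s s', eqc R s s' -> g s = g s'.
Proof. intros H s s' E; induction E; auto; congruence. Qed.

Lemma lift_cls {X1 X2 X3 R} {T : Type} (g : gS X1 X2 X3 -> T) :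
  (forall s s', R s s' -> g s = g s') -> forall s, g (rep (cls R s)) = g s.
Proof. intros H s. symmetry. apply (descend R g H). apply rep_cls. Qed.

Lemma glue_pstop X1 X2 X3 R : is_pstop X1 -> is_pstop X2 -> is_pstop X3 -> is_pstop (glue X1 X2 X3 R).
Proof.
  intros P1 P2 P3. split; [|split; [|split]].
  - intros F q [H _]; exact H.
  - intros F G q [HF H] FG sub. split; auto. intros U UU sGU. apply H; auto. eapply fsub_trans; eauto.
  - intros q. split; [apply principal_filter|]. intros U UU sub.
    destruct (cls_surj q) as [s ->].
    destruct s as [[x|x]|x]; [left|right; left|right; right];
      exists (principal x), x; (split; [apply ps_pr; auto|split; [reflexivity|]]);
      (eapply fsub_trans; [|exact sub]); intros B [A [PA HA]]; apply HA, PA.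
  - intros F q HF. split.
    + intros [_ H] U UU sub. split; [apply (uf UU)|]. intros U' UU' sub'. apply H; auto.
      eapply fsub_trans; eauto.
    + intros H. split; auto. intros U UU sub. destruct (H U UU sub) as [_ H']. apply H'; auto.
      apply fsub_refl.
Qed.

Lemma cont_in1 X1 X2 X3 R : is_pstop X1 -> cont X1 (glue X1 X2 X3 R) (fun x => cls R (in1 x)).
Proof.
  intros P F x Fx. split; [apply fimg_filter, (ps_filter P _ _ Fx)|].
  intros U UU sub. left. exists F, x. split; auto.
Qed.
Lemma cont_in2 X1 X2 X3 R : is_pstop X2 -> cont X2 (glue X1 X2 X3 R) (fun x => cls R (in2 x)).
Proof.
  intros P F x Fx. split; [apply fimg_filter, (ps_filter P _ _ Fx)|].
  intros U UU sub. right; left. exists F, x. split; auto.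
Qed.
Lemma cont_in3 X1 X2 X3 R : is_pstop X3 -> cont X3 (glue X1 X2 X3 R) (fun x => cls R (in3 x)).
Proof.
  intros P F x Fx. split; [apply fimg_filter, (ps_filter P _ _ Fx)|].
  intros U UU sub. right; right. exists F, x. split; auto.
Qed.

Definition respects {S T : Type} (R : S -> S -> Prop) (g : S -> T) := forall s s', R s s' -> g s = g s'.

Lemma chart_univ X1 X2 X3 R Y (g : gS X1 X2 X3 -> pt Y) (X : space) (e : pt X -> gS X1 X2 X3) :
  is_pstop X -> is_pstop Y -> respects R g -> cont X Y (fun x => g (e x)) ->
  forall U q, is_filter U -> chart_cv (cls R) X e U q ->
  cv Y (fimg (fun q => g (rep q)) U) (g (rep q)).
Proof.
  intros PX PY resp cg U q HU [G [x [Gx [E sub]]]]. subst q. rewrite (lift_cls g resp).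
  apply (ps_up PY (fimg (fun x => g (e x)) G)); auto. apply fimg_filter; auto.
  eapply fsub_trans. apply (fimg_ext _ (fun x => g (rep (cls R (e x))))).
  intros; rewrite (lift_cls g resp); auto.
  eapply fsub_trans. apply (fimg_comp2 (fun y => cls R (e y)) (fun q => g (rep q))).
  apply fimg_mono; auto.
Qed.

Lemma glue_univ X1 X2 X3 R Y (g : gS X1 X2 X3 -> pt Y) :
  is_pstop X1 -> is_pstop X2 -> is_pstop X3 -> is_pstop Y -> respects R g ->
  cont X1 Y (fun x => g (in1 x)) -> cont X2 Y (fun x => g (in2 x)) -> cont X3 Y (fun x => g (in3 x)) ->
  cont (glue X1 X2 X3 R) Y (fun q => g (rep q)).
Proof.
  intros P1 P2 P3 PY resp c1 c2 c3. apply cont_by_ultra; auto. apply glue_pstop; auto.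
  intros U q UU [HU H]. destruct (H U UU (fsub_refl U)) as [c|[c|c]].
  - exact (chart_univ X1 X2 X3 R Y g X1 in1 P1 PY resp c1 U q HU c).
  - exact (chart_univ X1 X2 X3 R Y g X2 in2 P2 PY resp c2 U q HU c).
  - exact (chart_univ X1 X2 X3 R Y g X3 in3 P3 PY resp c3 U q HU c).
Qed.

Lemma chart_univZ X1 X2 X3 R Z Y (g : gS X1 X2 X3 -> pt Z -> pt Y) (X : space) (e : pt X -> gS X1 X2 X3) :
  is_pstop X -> is_pstop Y -> is_pstop Z -> (forall s s' z, R s s' -> g s z = g s' z) ->
  cont (prod_space X Z) Y (fun p => g (e (fst p)) (snd p)) ->
  forall U (p : pt (prod_space (glue X1 X2 X3 R) Z)), is_ultrafilter U ->
  cv (prod_space (glue X1 X2 X3 R) Z) U p ->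
  chart_cv (cls R) X e (fimg fst U) (fst p) ->
  cv Y (fimg (fun p => g (rep (fst p)) (snd p)) U) (g (rep (fst p)) (snd p)).
Proof.
  intros PX PY PZ resp cg U [q z] UU Up [G [x [Gx [E sub]]]]. simpl in *. subst q.
  assert (resp' : forall z, respects R (fun s => g s z)) by (intros z' s s' H; apply resp; auto).
  rewrite (lift_cls (fun s => g s z) (resp' z)).
  pose proof (ps_filter PX _ _ Gx) as HG.
  set (F := fun C : pt X * pt Z -> Prop => exists A, G A /\ forall p, A (fst p) -> C p).
  assert (HF : is_filter F).
  { split; [|split; [|split]].
    - exists (fun _ => True); split; auto. apply (fT HG).
    - intros [A [GA HA]]. destruct (f_ne HG A GA) as [x' Ax']. exact (HA (x', z) Ax').
    - intros C D [A [GA HA]] CD. exists A; split; auto.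
    - intros C D [A [GA HA]] [A' [GA' HA']]. exists (fun x => A x /\ A' x); split.
      apply (fI HG); auto. intros p [a a']; split; auto. }
  set (f := fun p : pt X * pt Z => (cls R (e (fst p)), snd p)).
  assert (sFU : fsub (fimg f F) U).
  { intros S [C [[A [GA HA]] HC]].
    assert (H1 : fimg fst U (fun q' => exists x', A x' /\ cls R (e x') = q')).
    { apply sub. exists A; split; auto. intros x' Ax'; exists x'; auto. }
    destruct H1 as [C' [UC' HC']]. apply (fS (uf UU) C'); auto.
    intros [q' z'] Cq. destruct (HC' _ Cq) as [x' [Ax' E']]. simpl in E'. subst q'.
    apply (HC (x', z')). apply HA. exact Ax'. }
  destruct (ultra_lift f F U HF UU sFU) as [V [UV [sFV sVU]]].
  assert (sUV : fsub U (fimg f V)).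
  { apply (proj2 (fimg_ultra f V UV)); auto. apply (uf UU). }
  assert (Vc : cv (prod_space X Z) V (x, z)).
  { split; [apply (uf UV)|split; simpl].
    - apply (ps_up PX G); auto. apply fimg_filter, (uf UV).
      intros A GA. exists (fun p => A (fst p)); split; auto. apply sFV. exists A; split; auto.
    - destruct Up as [_ [_ Uz]]. simpl in Uz. apply (ps_up PZ (fimg snd U)); auto.
      apply fimg_filter, (uf UV).
      eapply fsub_trans. apply fimg_mono, sUV.
      eapply fsub_trans. apply fimg_comp1. apply fimg_ext. intros; reflexivity. }
  apply (ps_up PY (fimg (fun p => g (e (fst p)) (snd p)) V)).
  apply (cg V (x, z) Vc). apply fimg_filter, (uf UU).
  eapply fsub_trans. apply (fimg_ext (fun p => g (e (fst p)) (snd p)) (fun p => (fun p => g (rep (fst p)) (snd p)) (f p)) V).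
  intros [x' z']. simpl. rewrite (lift_cls (fun s => g s z') (resp' z')). reflexivity.
  eapply fsub_trans. apply (fimg_comp2 f (fun p => g (rep (fst p)) (snd p)) V). apply fimg_mono; auto.
Qed.

Lemma glue_univZ X1 X2 X3 R Z Y (g : gS X1 X2 X3 -> pt Z -> pt Y) :
  is_pstop X1 -> is_pstop X2 -> is_pstop X3 -> is_pstop Z -> is_pstop Y ->
  (forall s s' z, R s s' -> g s z = g s' z) ->
  cont (prod_space X1 Z) Y (fun p => g (in1 (fst p)) (snd p)) ->
  cont (prod_space X2 Z) Y (fun p => g (in2 (fst p)) (snd p)) ->
  cont (prod_space X3 Z) Y (fun p => g (in3 (fst p)) (snd p)) ->
  cont (prod_space (glue X1 X2 X3 R) Z) Y (fun p => g (rep (fst p)) (snd p)).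
Proof.
  intros P1 P2 P3 PZ PY resp c1 c2 c3. apply cont_by_ultra; auto.
  apply prod_pstop; auto. apply glue_pstop; auto.
  intros U p UU Up. pose proof Up as [_ [[_ H] _]].
  destruct (H _ (fimg_ultra fst U UU) (fsub_refl _)) as [c|[c|c]].
  - exact (chart_univZ X1 X2 X3 R Z Y g X1 in1 P1 PY PZ resp c1 U p UU Up c).
  - exact (chart_univZ X1 X2 X3 R Z Y g X2 in2 P2 PY PZ resp c2 U p UU Up c).
  - exact (chart_univZ X1 X2 X3 R Z Y g X3 in3 P3 PY PZ resp c3 U p UU Up c).
Qed.

From Stdlib Require Import Reals Lra Classical ProofIrrelevance FunctionalExtensionality PropExtensionality IndefiniteDescription.
Open Scope R_scope.

Definition gcase {X1 X2 X3 : space} {T : Type} (g1 : pt X1 -> T) (g2 : pt X2 -> T) (g3 : pt X3 -> T)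
  (s : gS X1 X2 X3) : T :=
  match s with inl (inl a) => g1 a | inl (inr x) => g2 x | inr e => g3 e end.

Lemma cont_from_empty Y (g : pt empty_space -> pt Y) : cont empty_space Y g.
Proof. intros F x; destruct x. Qed.
Lemma cont_from_empty_prod Z Y (g : pt (prod_space empty_space Z) -> pt Y) : cont (prod_space empty_space Z) Y g.
Proof. intros F [x z]; destruct x. Qed.

Definition po_R {B A X : space} (i : pt B -> pt A) (f : pt B -> pt X)
  (s s' : gS A X empty_space) : Prop := exists b, s = in1 (i b) /\ s' = in2 (f b).
Definition po {B A X : space} (i : pt B -> pt A) (f : pt B -> pt X) : space :=
  glue A X empty_space (po_R i f).
Definition po_u {B A X : space} (i : pt B -> pt A) (f : pt B -> pt X) (a : pt A) : pt (po i f) :=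
  cls (po_R i f) (in1 a).
Definition po_v {B A X : space} (i : pt B -> pt A) (f : pt B -> pt X) (x : pt X) : pt (po i f) :=
  cls (po_R i f) (in2 x).

Lemma po_pstop B A X i f : is_pstop A -> is_pstop X -> is_pstop (@po B A X i f).
Proof. intros; apply glue_pstop; auto. apply empty_pstop. Qed.

Lemma po_comm B A X i f b : @po_u B A X i f (i b) = po_v i f (f b).
Proof. apply cls_eq, eqc_base. exists b; auto. Qed.

Lemma po_pushout B A X (i : pt B -> pt A) (f : pt B -> pt X) :
  is_pstop A -> is_pstop X -> is_pushout B A X (po i f) i f (po_u i f) (po_v i f).
Proof.
  intros PA PX. split; [apply po_pstop; auto|]. split; [apply cont_in1; auto|].
  split; [apply cont_in2; auto|]. split; [apply po_comm|].
  intros Y PY g h cg ch E.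
  set (gg := gcase g h (empty_map Y)).
  assert (resp : respects (po_R i f) gg).
  { intros s s' [b [-> ->]]. simpl. apply E. }
  exists (fun q => gg (rep q)). split; [|split; [|split]].
  - apply glue_univ; auto. apply empty_pstop. apply cont_from_empty.
  - intros a. unfold po_u. rewrite (lift_cls gg resp). reflexivity.
  - intros x. unfold po_v. rewrite (lift_cls gg resp). reflexivity.
  - intros k' ck' e1 e2 p. destruct (cls_surj p) as [s ->].
    rewrite (lift_cls gg resp). destruct s as [[a|x]|e].
    + apply e1. + apply e2. + destruct e.
Qed.

Lemma po_cyl_pushout B A X (i : pt B -> pt A) (f : pt B -> pt X) :
  is_pstop A -> is_pstop X ->
  is_pushout (cyl B) (cyl A) (cyl X) (cyl (po i f)) (cyl_map i) (cyl_map f)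
    (cyl_map (po_u i f)) (cyl_map (po_v i f)).
Proof.
  intros PA PX. pose proof interval_pstop as PI. assert (PP := po_pstop B A X i f PA PX).
  split; [apply cyl_pstop; auto|].
  split; [apply cont_cyl_map; auto; apply cont_in1; auto|].
  split; [apply cont_cyl_map; auto; apply cont_in2; auto|].
  split; [intros [b t]; unfold cyl_map; simpl; f_equal; apply po_comm|].
  intros Y PY g h cg ch E.
  set (gg := fun s (t : I01) => gcase (fun a => g (a, t)) (fun x => h (x, t)) (empty_map Y) s).
  assert (resp : forall s s' t, po_R i f s s' -> gg s t = gg s' t).
  { intros s s' t [b [-> ->]]. simpl. apply (E (b, t)). }
  assert (resp' : forall t, respects (po_R i f) (fun s => gg s t)) by (intros t s s' H; apply resp; auto).
  exists (fun p => gg (rep (fst p)) (snd p)). split; [|split; [|split]].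
  - apply (glue_univZ A X empty_space (po_R i f) interval_space Y gg); auto. apply empty_pstop.
    + apply (cont_ext _ _ g); auto. apply cyl_pstop; auto. intros [a t]; reflexivity.
    + apply (cont_ext _ _ h); auto. apply cyl_pstop; auto. intros [a t]; reflexivity.
    + apply cont_from_empty_prod.
  - intros [a t]. simpl. unfold po_u. rewrite (lift_cls _ (resp' t)). reflexivity.
  - intros [x t]. simpl. unfold po_v. rewrite (lift_cls _ (resp' t)). reflexivity.
  - intros k' ck' e1 e2 [p t]. destruct (cls_surj p) as [s ->]. simpl.
    rewrite (lift_cls _ (resp' t)). destruct s as [[a|x]|e].
    + apply (e1 (a, t)). + apply (e2 (x, t)). + destruct e.
Qed.

From Stdlib Require Import Reals Lra Classical ProofIrrelevance FunctionalExtensionality PropExtensionality IndefiniteDescription.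
Open Scope R_scope.

Definition dpo_R {B A : space} (i : pt B -> pt A) (s s' : gS A (cyl B) A) : Prop :=
  (exists b, s = in1 (i b) /\ s' = in2 (ik false b)) \/ (exists b, s = in3 (i b) /\ s' = in2 (ik true b)).
Definition dpo {B A : space} (i : pt B -> pt A) : space := glue A (cyl B) A (dpo_R i).
Definition dpo_a0 {B A : space} (i : pt B -> pt A) (a : pt A) : pt (dpo i) := cls (dpo_R i) (in1 a).
Definition dpo_c {B A : space} (i : pt B -> pt A) (q : pt (cyl B)) : pt (dpo i) := cls (dpo_R i) (in2 q).
Definition dpo_a1 {B A : space} (i : pt B -> pt A) (a : pt A) : pt (dpo i) := cls (dpo_R i) (in3 a).

Lemma dpo_pstop B A i : is_pstop B -> is_pstop A -> is_pstop (@dpo B A i).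
Proof. intros; apply glue_pstop; auto. apply cyl_pstop; auto. Qed.

Lemma dpo_comm0 B A (i : pt B -> pt A) b : dpo_a0 i (i b) = dpo_c i (ik false b).
Proof. apply cls_eq, eqc_base. left; exists b; auto. Qed.
Lemma dpo_comm1 B A (i : pt B -> pt A) b : dpo_a1 i (i b) = dpo_c i (ik true b).
Proof. apply cls_eq, eqc_base. right; exists b; auto. Qed.

Lemma dpo_dpushout B A (i : pt B -> pt A) : is_pstop B -> is_pstop A ->
  is_dpushout B A (dpo i) i (dpo_a0 i) (dpo_c i) (dpo_a1 i).
Proof.
  intros PB PA. assert (PC := cyl_pstop B PB).
  split; [apply dpo_pstop; auto|]. split; [apply cont_in1; auto|].
  split; [apply cont_in2; auto|]. split; [apply cont_in3; auto|].
  split; [apply dpo_comm0|]. split; [apply dpo_comm1|].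
  intros Y PY g0 h g1 c0 ch c1 E0 E1.
  set (gg := gcase g0 h g1).
  assert (resp : respects (dpo_R i) gg).
  { intros s s' [[b [-> ->]]|[b [-> ->]]]; simpl; auto. }
  exists (fun q => gg (rep q)). split; [|split; [|split; [|split]]].
  - apply glue_univ; auto.
  - intros a. unfold dpo_a0. rewrite (lift_cls gg resp). reflexivity.
  - intros x. unfold dpo_c. rewrite (lift_cls gg resp). reflexivity.
  - intros x. unfold dpo_a1. rewrite (lift_cls gg resp). reflexivity.
  - intros k' ck' e0 e e1 p. destruct (cls_surj p) as [s ->].
    rewrite (lift_cls gg resp). destruct s as [[a|x]|a].
    + apply e0. + apply e. + apply e1.
Qed.

Definition dpo_j {B A : space} (i : pt B -> pt A) (q : pt (dpo i)) : pt (cyl A) :=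
  gcase (ik false) (cyl_map i) (ik true) (rep q).

Lemma dpo_j_resp B A (i : pt B -> pt A) : respects (dpo_R i) (gcase (ik false) (cyl_map i) (ik true)).
Proof. intros s s' [[b [-> ->]]|[b [-> ->]]]; reflexivity. Qed.

Lemma dpo_j_a0 B A (i : pt B -> pt A) a : dpo_j i (dpo_a0 i a) = ik false a.
Proof. unfold dpo_j, dpo_a0. rewrite (lift_cls _ (dpo_j_resp B A i)). reflexivity. Qed.
Lemma dpo_j_c B A (i : pt B -> pt A) q : dpo_j i (dpo_c i q) = cyl_map i q.
Proof. unfold dpo_j, dpo_c. rewrite (lift_cls _ (dpo_j_resp B A i)). reflexivity. Qed.
Lemma dpo_j_a1 B A (i : pt B -> pt A) a : dpo_j i (dpo_a1 i a) = ik true a.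
Proof. unfold dpo_j, dpo_a1. rewrite (lift_cls _ (dpo_j_resp B A i)). reflexivity. Qed.

Lemma dpo_j_cont B A (i : pt B -> pt A) : is_pstop B -> is_pstop A -> cont B A i ->
  cont (dpo i) (cyl A) (dpo_j i).
Proof.
  intros PB PA ci. apply glue_univ; auto. apply cyl_pstop; auto. apply cyl_pstop; auto.
  apply dpo_j_resp. apply cont_ik; auto. apply cont_cyl_map; auto. apply cont_ik; auto.
Qed.

Lemma dpo_surj B A (i : pt B -> pt A) (p : pt (dpo i)) :
  (exists a, p = dpo_a0 i a) \/ (exists q, p = dpo_c i q) \/ (exists a, p = dpo_a1 i a).
Proof.
  destruct (cls_surj p) as [[[a|q]|a] ->]; [left|right;left|right;right]; eexists; reflexivity.
Qed.

Lemma po_v_cof B A X (i : pt B -> pt A) (f : pt B -> pt X) :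
  is_pstop B -> is_pstop A -> is_pstop X -> cof B A i -> cont B X f -> cof X (po i f) (po_v i f).
Proof.
  intros PB PA PX [ci hi] cf. split; [apply cont_in2; auto|].
  intros k Y PY F G cF cG E.
  assert (PP := po_pstop B A X i f PA PX).
  assert (c1 : cont A Y (fun a => F (po_u i f a))) by (apply cont_comp; auto; apply cont_in1; auto).
  assert (c2 : cont (cyl B) Y (fun q => G (cyl_map f q))).
  { apply cont_comp; auto. apply cyl_pstop; auto. apply cont_cyl_map; auto. }
  assert (E' : forall b, F (po_u i f (i b)) = G (cyl_map f (ik k b))).
  { intros b. rewrite po_comm. apply E. }
  destruct (hi k Y PY _ _ c1 c2 E') as [H' [cH' [e1 e2]]].
  destruct (po_cyl_pushout B A X i f PA PX) as [_ [_ [_ [_ U]]]].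
  destruct (U Y PY H' G cH' cG e2) as [K [cK [k1 [k2 _]]]].
  exists K. split; auto. split; auto.
  intros p. destruct (cls_surj p) as [[[a|x]|e] ->].
  - change (K (cyl_map (po_u i f) (ik k a)) = F (po_u i f a)). rewrite k1. apply e1.
  - change (K (cyl_map (po_v i f) (ik k x)) = F (po_v i f x)). rewrite k2. symmetry. apply E.
  - destruct e.
Qed.

From Stdlib Require Import Reals Lra Classical ProofIrrelevance FunctionalExtensionality PropExtensionality IndefiniteDescription.
Open Scope R_scope.

Lemma cont_ff X : is_pstop X -> cont (cyl (cyl X)) X (fun p => fst (fst p)).
Proof.
  intros PX. apply (cont_comp _ (cyl X)); auto. do 2 apply cyl_pstop; auto. apply cont_fst. apply cont_fst.
Qed.
Lemma cont_sf X : is_pstop X -> cont (cyl (cyl X)) interval_space (fun p => snd (fst p)).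
Proof.
  intros PX. apply (cont_comp _ (cyl X)); auto. do 2 apply cyl_pstop; auto. apply interval_pstop.
  apply cont_fst. apply cont_snd.
Qed.
Lemma cont_proj02 X : is_pstop X -> cont (cyl (cyl X)) (cyl X) (fun p => (fst (fst p), snd p)).
Proof.
  intros PX. apply (cont_pair (cyl (cyl X)) X interval_space); auto.
  do 2 apply cyl_pstop; auto. apply interval_pstop. apply cont_ff; auto. apply cont_snd.
Qed.
Lemma cont_swap X : is_pstop X ->
  cont (cyl (cyl X)) (cyl (cyl X)) (fun p => ((fst (fst p), snd p), snd (fst p))).
Proof.
  intros PX. apply (cont_pair (cyl (cyl X)) (cyl X) interval_space); auto.
  do 2 apply cyl_pstop; auto. apply cyl_pstop; auto. apply interval_pstop.
  apply cont_proj02; auto. apply cont_sf; auto.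
Qed.

Lemma phep B A (i : pt B -> pt A) : is_pstop B -> is_pstop A -> cof B A i ->
  forall Y, is_pstop Y -> forall (be : pt (cyl A) -> pt Y) (ga : pt (cyl (cyl B)) -> pt Y),
  cont (cyl A) Y be -> cont (cyl (cyl B)) Y ga ->
  (forall b t, be (i b, t) = ga ((b, t), zero01)) ->
  exists K : pt (cyl (cyl A)) -> pt Y, cont (cyl (cyl A)) Y K /\
    (forall a t, K ((a, t), zero01) = be (a, t)) /\
    (forall b t w, K ((i b, t), w) = ga ((b, t), w)).
Proof.
  intros PB PA [ci hi] Y PY be ga cbe cga E.
  assert (PCB := cyl_pstop B PB).
  assert (PM := po_pstop B A (cyl B) i (ik false) PA PCB).
  destruct (hi false _ PM (po_u i (ik false)) (po_v i (ik false)) (cont_in1 _ _ _ _ PA)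
    (cont_in2 _ _ _ _ PCB) (po_comm B A (cyl B) i (ik false))) as [r [cr [r1 r2]]].
  set (h := fun p : pt (cyl (cyl B)) => ga ((fst (fst p), snd p), snd (fst p))).
  assert (ch : cont (cyl (cyl B)) Y h).
  { apply (cont_comp (cyl (cyl B)) (cyl (cyl B)) Y (fun p : pt (cyl (cyl B)) => ((fst (fst p), snd p), snd (fst p))) ga); auto. do 2 apply cyl_pstop; auto. apply cont_swap; auto. }
  destruct (po_cyl_pushout B A (cyl B) i (ik false) PA PCB) as [_ [_ [_ [_ U]]]].
  destruct (U Y PY be h cbe ch) as [ka [cka [k1 [k2 _]]]].
  { intros [b t]. simpl. apply E. }
  exists (fun p => ka (r (fst (fst p), snd p), snd (fst p))). split; [|split].
  - apply (cont_comp _ (cyl (po i (ik false)))); auto. do 2 apply cyl_pstop; auto.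
    apply (cont_pair (cyl (cyl A)) (po i (ik false)) interval_space); auto.
    do 2 apply cyl_pstop; auto. apply interval_pstop.
    apply (cont_comp _ (cyl A)); auto. do 2 apply cyl_pstop; auto. apply cont_proj02; auto.
    apply cont_sf; auto.
  - intros a t. simpl. change (a, zero01) with (ik false a). rewrite r1.
    apply (k1 (a, t)).
  - intros b t w. simpl. change (i b, w) with (cyl_map i (b, w)). rewrite r2.
    apply (k2 ((b, w), t)).
Qed.

From Stdlib Require Import Reals Lra.
Open Scope R_scope.

Definition clamp (lo hi x : R) : R := Rmax lo (Rmin hi x).
Definition psiX (t v : R) : R := (t - 1/2) - 2/3 * clamp (-(v/2)) (v/2) (t - 1/2).
Definition psiR (t v : R) : R := Rmax (2 * Rabs (t - 1/2)) v.
Definition thU (t' w' : R) : R := clamp (-((1 - w')/2)) ((1 - w')/2) (3 * (t' - 1/2)).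
Definition thV (t' w' : R) : R := Rmax 0 (Rmin (1 - w') (3 * (1 - w') / 2 - 3 * Rabs (t' - 1/2))).

Ltac dstr := unfold clamp, Rmax, Rmin, Rabs in *; repeat (destruct Rle_dec || destruct Rcase_abs); try lra.

Lemma R1a t v : 0 <= t <= 1 -> 0 <= v <= 1 -> 0 <= psiX t v + 1/2 <= 1.
Proof. intros; unfold psiX; dstr. Qed.
Lemma R1b t v : 0 <= t <= 1 -> 0 <= v <= 1 -> 0 <= 1 - psiR t v <= 1.
Proof. intros; unfold psiR; dstr. Qed.
Lemma R2a t v : 0 <= t <= 1 -> 0 <= v <= 1 -> thU (psiX t v + 1/2) (1 - psiR t v) + 1/2 = t.
Proof. intros; unfold thU, psiX, psiR; dstr. Qed.
Lemma R2b t v : 0 <= t <= 1 -> 0 <= v <= 1 -> thV (psiX t v + 1/2) (1 - psiR t v) = v.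
Proof. intros; unfold thV, psiX, psiR; dstr. Qed.
Lemma R3 t v : 0 <= t <= 1 -> 0 <= v <= 1 -> (t = 0 \/ t = 1 \/ v = 1) -> 1 - psiR t v = 0.
Proof. intros ? ? [->|[->| ->]]; unfold psiR; dstr. Qed.
Lemma R4 t : 0 <= t <= 1 -> 1/3 <= psiX t 1 + 1/2 <= 2/3.
Proof. intros; unfold psiX; dstr. Qed.
Lemma R5a v : 0 <= v <= 1 -> psiX 0 v + 1/2 <= 1/3.
Proof. intros; unfold psiX; dstr. Qed.
Lemma R5b v : 0 <= v <= 1 -> 2/3 <= psiX 1 v + 1/2.
Proof. intros; unfold psiX; dstr. Qed.
Lemma R6 t' : 0 <= t' <= 1/3 -> thU t' 0 + 1/2 = 0.
Proof. intros; unfold thU; dstr. Qed.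
Lemma R7 t' : 1/3 <= t' <= 2/3 -> thV t' 0 = 1.
Proof. intros; unfold thV; dstr. Qed.
Lemma R8 t' : 2/3 <= t' <= 1 -> thU t' 0 + 1/2 = 1.
Proof. intros; unfold thU; dstr. Qed.
Lemma R9 t' w' : 0 <= w' <= 1 -> 0 <= thU t' w' + 1/2 <= 1.
Proof. intros; unfold thU; dstr. Qed.
Lemma R10 t' w' : 0 <= w' <= 1 -> 0 <= thV t' w' <= 1.
Proof. intros; unfold thV; dstr. Qed.

From Stdlib Require Import Reals Lra Classical ProofIrrelevance FunctionalExtensionality PropExtensionality IndefiniteDescription.
Open Scope R_scope.

Lemma closed_le Z (c : pt Z -> R) U z a : is_pstop Z -> rcont Z c -> cv Z U z ->
  U (fun x => c x <= a) -> c z <= a.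
Proof.
  intros PZ rc Uz Ua. apply Rnot_lt_le; intros H.
  assert (HU := ps_filter PZ _ _ Uz).
  pose proof (rc U z Uz (c z - a) ltac:(lra)) as Hb.
  apply (fN HU). apply (fS HU _ _ (fI HU _ _ Ua Hb)). intros x [h1 h2].
  apply Rabs_def2 in h2. lra.
Qed.
Lemma closed_ge Z (c : pt Z -> R) U z a : is_pstop Z -> rcont Z c -> cv Z U z ->
  U (fun x => a <= c x) -> a <= c z.
Proof.
  intros PZ rc Uz Ua. apply Rnot_lt_le; intros H.
  assert (HU := ps_filter PZ _ _ Uz).
  pose proof (rc U z Uz (a - c z) ltac:(lra)) as Hb.
  apply (fN HU). apply (fS HU _ _ (fI HU _ _ Ua Hb)). intros x [h1 h2].
  apply Rabs_def2 in h2. lra.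
Qed.

Lemma cont_agree Z Y (h g : pt Z -> pt Y) U z S : is_pstop Z -> is_pstop Y -> cont Z Y g ->
  cv Z U z -> U S -> (forall x, S x -> h x = g x) -> h z = g z -> cv Y (fimg h U) (h z).
Proof.
  intros PZ PY cg Uz US E Ez. rewrite Ez. apply (ps_up PY (fimg g U)); auto.
  apply fimg_filter, (ps_filter PZ _ _ Uz).
  apply (fimg_agree g h U S (ps_filter PZ _ _ Uz) US). intros; symmetry; auto.
Qed.

Lemma cont_paste Z Y (h g1 g2 g3 : pt Z -> pt Y) (c : pt Z -> R) (a b : R) :
  is_pstop Z -> is_pstop Y -> rcont Z c -> cont Z Y g1 -> cont Z Y g2 -> cont Z Y g3 ->
  (forall z, c z <= a -> h z = g1 z) -> (forall z, a <= c z <= b -> h z = g2 z) ->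
  (forall z, b <= c z -> h z = g3 z) -> cont Z Y h.
Proof.
  intros PZ PY rc c1 c2 c3 E1 E2 E3. apply cont_by_ultra; auto.
  intros U z UU Uz. destruct (ultra_compl U UU (fun x => c x <= a)) as [H|H].
  - apply (cont_agree Z Y h g1 U z _ PZ PY c1 Uz H); auto. apply E1.
    apply (closed_le Z c U z a); auto.
  - assert (H' : U (fun x => a <= c x)) by (apply (fS (uf UU) _ _ H); intros; lra).
    destruct (ultra_compl U UU (fun x => c x <= b)) as [G|G].
    + assert (G' : U (fun x => a <= c x <= b)) by (apply (fS (uf UU) _ _ (fI (uf UU) _ _ H' G)); intros x [p q]; lra).
      apply (cont_agree Z Y h g2 U z _ PZ PY c2 Uz G'); auto. apply E2. split.
      apply (closed_ge Z c U z a); auto. apply (closed_le Z c U z b); auto.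
    + assert (G' : U (fun x => b <= c x)) by (apply (fS (uf UU) _ _ G); intros; lra).
      apply (cont_agree Z Y h g3 U z _ PZ PY c3 Uz G'); auto. apply E3.
      apply (closed_ge Z c U z b); auto.
Qed.

Lemma rcont_ext Z h1 h2 : (forall z, h1 z = h2 z) -> rcont Z h1 -> rcont Z h2.
Proof. intros E c. replace h2 with h1; auto. apply functional_extensionality; auto. Qed.

Lemma rcont_opp Z h : is_pstop Z -> rcont Z h -> rcont Z (fun z => - h z).
Proof. intros PZ c. apply (rcont_ext Z (fun z => (-1) * h z)). intros; ring. apply rcont_scal; auto. Qed.
Lemma rcont_minus Z h1 h2 : is_pstop Z -> rcont Z h1 -> rcont Z h2 -> rcont Z (fun z => h1 z - h2 z).
Proof. intros PZ c1 c2. apply rcont_plus; auto. apply rcont_opp; auto. Qed.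
Lemma rcont_scalr Z c h : is_pstop Z -> rcont Z h -> rcont Z (fun z => h z * c).
Proof. intros PZ ch. apply (rcont_ext Z (fun z => c * h z)). intros; ring. apply rcont_scal; auto. Qed.
Lemma rcont_div Z c h : is_pstop Z -> rcont Z h -> rcont Z (fun z => h z / c).
Proof. intros PZ ch. apply rcont_scalr; auto. Qed.

Ltac rc := repeat first [ assumption | apply rcont_const | apply rcont_plus | apply rcont_minus
  | apply rcont_opp | apply rcont_scal | apply rcont_div | apply rcont_scalr | apply rcont_max
  | apply rcont_min | apply rcont_abs ].

Lemma clamp01 r : 0 <= clamp 0 1 r <= 1.
Proof. dstr. Qed.
Definition mkI (r : R) : I01 := exist _ (clamp 0 1 r) (clamp01 r).
Definition val (x : I01) : R := proj1_sig x.
Lemma val_range (x : I01) : 0 <= val x <= 1.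
Proof. exact (proj2_sig x). Qed.
Lemma mkI_val r : 0 <= r <= 1 -> val (mkI r) = r.
Proof. intros; unfold val, mkI; simpl. dstr. Qed.
Lemma mkI_id x : mkI (val x) = x.
Proof. apply I01_eq. apply mkI_val, val_range. Qed.

Definition vk (k : bool) (w : R) : R := if k then w else 1 - w.
Definition kI (k : bool) : I01 := if k then one01 else zero01.
Lemma vk_range k w : 0 <= w <= 1 -> 0 <= vk k w <= 1.
Proof. destruct k; simpl; lra. Qed.
Lemma vk_inv k w : vk k (vk k w) = w.
Proof. destruct k; simpl; ring. Qed.
Lemma vk_kI k : vk k (val (kI k)) = 1.
Proof. destruct k; unfold vk, kI, val; simpl; ring. Qed.

Definition Pt k (t w : I01) : I01 := mkI (psiX (val t) (vk k (val w)) + 1/2).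
Definition Pw k (t w : I01) : I01 := mkI (1 - psiR (val t) (vk k (val w))).
Definition Tt (t' w' : I01) : I01 := mkI (thU (val t') (val w') + 1/2).
Definition Tw k (t' w' : I01) : I01 := mkI (vk k (thV (val t') (val w'))).

Lemma inv_t k t w : Tt (Pt k t w) (Pw k t w) = t.
Proof.
  pose proof (val_range t); pose proof (val_range w); pose proof (vk_range k _ (val_range w)).
  apply I01_eq. fold (val (Tt (Pt k t w) (Pw k t w))) (val t). unfold Tt, Pt, Pw.
  rewrite (mkI_val (psiX _ _ + _)) by (apply R1a; auto).
  rewrite (mkI_val (1 - _)) by (apply R1b; auto).
  rewrite R2a by auto. apply mkI_val; auto.
Qed.
Lemma inv_w k t w : Tw k (Pt k t w) (Pw k t w) = w.
Proof.
  pose proof (val_range t); pose proof (val_range w); pose proof (vk_range k _ (val_range w)).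
  apply I01_eq. fold (val (Tw k (Pt k t w) (Pw k t w))) (val w). unfold Tw, Pt, Pw.
  rewrite (mkI_val (psiX _ _ + _)) by (apply R1a; auto).
  rewrite (mkI_val (1 - _)) by (apply R1b; auto).
  rewrite R2b by auto. rewrite vk_inv. apply mkI_val; auto.
Qed.
Lemma face k t w : (val t = 0 \/ val t = 1 \/ w = kI k) -> Pw k t w = zero01.
Proof.
  intros H. apply I01_eq. fold (val (Pw k t w)). unfold Pw. rewrite R3.
  rewrite mkI_val by lra. reflexivity. apply val_range. apply vk_range, val_range.
  destruct H as [H|[H|H]]; auto. right; right. subst w. apply vk_kI.
Qed.
Lemma mid k t : 1/3 <= val (Pt k t (kI k)) <= 2/3.
Proof.
  unfold Pt. rewrite vk_kI. pose proof (R4 _ (val_range t)).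
  rewrite mkI_val; lra.
Qed.
Lemma left_ k w : val (Pt k zero01 w) <= 1/3.
Proof.
  unfold Pt. pose proof (R5a _ (vk_range k _ (val_range w))).
  pose proof (R1a 0 _ ltac:(lra) (vk_range k _ (val_range w))).
  change (val zero01) with 0. rewrite mkI_val; lra.
Qed.
Lemma right_ k w : 2/3 <= val (Pt k one01 w).
Proof.
  unfold Pt. pose proof (R5b _ (vk_range k _ (val_range w))).
  pose proof (R1a 1 _ ltac:(lra) (vk_range k _ (val_range w))).
  change (val one01) with 1. rewrite mkI_val; lra.
Qed.
Lemma reg_left t : val t <= 1/3 -> Tt t zero01 = zero01.
Proof.
  intros H. pose proof (val_range t). apply I01_eq. fold (val (Tt t zero01)). unfold Tt.
  change (val zero01) with 0. rewrite R6 by lra. rewrite mkI_val by lra. reflexivity.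
Qed.
Lemma reg_mid k t : 1/3 <= val t <= 2/3 -> Tw k t zero01 = kI k.
Proof.
  intros H. apply I01_eq. fold (val (Tw k t zero01)) (val (kI k)). unfold Tw.
  change (val zero01) with 0. rewrite R7 by lra. destruct k; simpl; unfold val, mkI; simpl; dstr.
Qed.
Lemma reg_right t : 2/3 <= val t -> Tt t zero01 = one01.
Proof.
  intros H. pose proof (val_range t). apply I01_eq. fold (val (Tt t zero01)). unfold Tt.
  change (val zero01) with 0. rewrite R8 by lra. rewrite mkI_val by lra. reflexivity.
Qed.

Ltac contI PZ := apply cont_I; [exact PZ|]; unfold Pt, Pw, Tt, Tw, mkI, val, psiX, psiR, thU, thV, vk, clamp; simpl.

Lemma cont_Pt k Z tt ww : is_pstop Z -> cont Z interval_space tt -> cont Z interval_space ww ->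
  cont Z interval_space (fun z => Pt k (tt z) (ww z)).
Proof.
  intros PZ ct cw. pose proof (rcont_I Z tt PZ ct). pose proof (rcont_I Z ww PZ cw).
  contI PZ. destruct k; rc.
Qed.
Lemma cont_Pw k Z tt ww : is_pstop Z -> cont Z interval_space tt -> cont Z interval_space ww ->
  cont Z interval_space (fun z => Pw k (tt z) (ww z)).
Proof.
  intros PZ ct cw. pose proof (rcont_I Z tt PZ ct). pose proof (rcont_I Z ww PZ cw).
  contI PZ. destruct k; rc.
Qed.
Lemma cont_Tt Z tt ww : is_pstop Z -> cont Z interval_space tt -> cont Z interval_space ww ->
  cont Z interval_space (fun z => Tt (tt z) (ww z)).
Proof.
  intros PZ ct cw. pose proof (rcont_I Z tt PZ ct). pose proof (rcont_I Z ww PZ cw).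
  contI PZ. rc.
Qed.
Lemma cont_Tw k Z tt ww : is_pstop Z -> cont Z interval_space tt -> cont Z interval_space ww ->
  cont Z interval_space (fun z => Tw k (tt z) (ww z)).
Proof.
  intros PZ ct cw. pose proof (rcont_I Z tt PZ ct). pose proof (rcont_I Z ww PZ cw).
  contI PZ. destruct k; rc.
Qed.

Lemma relcyl B A (i : pt B -> pt A) : is_pstop B -> is_pstop A -> cof B A i ->
  cof (dpo i) (cyl A) (dpo_j i).
Proof.
  intros PB PA Ci. pose proof Ci as [ci hi].
  pose proof interval_pstop as PI.
  assert (PCA := cyl_pstop A PA). assert (PCCA := cyl_pstop _ PCA).
  assert (PCB := cyl_pstop B PB). assert (PCCB := cyl_pstop _ PCB).
  assert (PP := dpo_pstop B A i PB PA). assert (PCP := cyl_pstop _ PP).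
  split; [apply dpo_j_cont; auto|].
  intros k Y PY f G cf cG E.
  assert (E0 : forall a, f (a, zero01) = G (dpo_a0 i a, kI k)).
  { intros a. pose proof (E (dpo_a0 i a)) as H. rewrite dpo_j_a0 in H. exact H. }
  assert (E1 : forall a, f (a, one01) = G (dpo_a1 i a, kI k)).
  { intros a. pose proof (E (dpo_a1 i a)) as H. rewrite dpo_j_a1 in H. exact H. }
  assert (Ec : forall b t, f (i b, t) = G (dpo_c i (b, t), kI k)).
  { intros b t. pose proof (E (dpo_c i (b, t))) as H. rewrite dpo_j_c in H. exact H. }
  set (bL := fun p : pt (cyl A) => G (dpo_a0 i (fst p), Tw k (snd p) zero01)).
  set (bM := fun p : pt (cyl A) => f (fst p, Tt (snd p) zero01)).
  set (bR := fun p : pt (cyl A) => G (dpo_a1 i (fst p), Tw k (snd p) zero01)).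
  set (be := fun p : pt (cyl A) => if Rlt_dec (val (snd p)) (1/3) then bL p
              else if Rle_dec (val (snd p)) (2/3) then bM p else bR p).
  assert (eL : forall p, val (snd p) <= 1/3 -> be p = bL p).
  { intros [a t] H. unfold be; simpl in *. destruct Rlt_dec; auto. destruct Rle_dec; [|lra].
    unfold bM, bL; simpl. rewrite reg_left by lra. rewrite reg_mid by lra. apply E0. }
  assert (eM : forall p, 1/3 <= val (snd p) <= 2/3 -> be p = bM p).
  { intros [a t] H. unfold be; simpl in *. destruct Rlt_dec; [lra|]. destruct Rle_dec; [auto|lra]. }
  assert (eR : forall p, 2/3 <= val (snd p) -> be p = bR p).
  { intros [a t] H. unfold be; simpl in *. destruct Rlt_dec; [lra|]. destruct Rle_dec; auto.
    unfold bM, bR; simpl. rewrite reg_right by lra. rewrite reg_mid by lra. apply E1. }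
  assert (csnd : cont (cyl A) interval_space snd) by apply cont_snd.
  assert (c0 : cont (cyl A) interval_space (fun _ => zero01)) by (apply cont_const; auto).
  assert (cbe : cont (cyl A) Y be).
  { apply (cont_paste (cyl A) Y be bL bM bR (fun p => val (snd p)) (1/3) (2/3)); auto.
    - apply rcont_I; auto.
    - unfold bL. apply (cont_comp (cyl A) (cyl (dpo i)) Y (fun p => (dpo_a0 i (fst p), Tw k (snd p) zero01)) G); auto.
      apply (cont_pair (cyl A) (dpo i) interval_space); auto.
      apply (cont_comp (cyl A) A); auto. apply cont_fst. apply cont_in1; auto.
      apply (cont_Tw k (cyl A) snd (fun _ => zero01)); auto.
    - unfold bM. apply (cont_comp (cyl A) (cyl A) Y (fun p => (fst p, Tt (snd p) zero01)) f); auto.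
      apply (cont_pair (cyl A) A interval_space); auto. apply cont_fst.
      apply (cont_Tt (cyl A) snd (fun _ => zero01)); auto.
    - unfold bR. apply (cont_comp (cyl A) (cyl (dpo i)) Y (fun p => (dpo_a1 i (fst p), Tw k (snd p) zero01)) G); auto.
      apply (cont_pair (cyl A) (dpo i) interval_space); auto.
      apply (cont_comp (cyl A) A); auto. apply cont_fst. apply cont_in3; auto.
      apply (cont_Tw k (cyl A) snd (fun _ => zero01)); auto. }
  set (ga := fun p : pt (cyl (cyl B)) =>
    G (dpo_c i (fst (fst p), Tt (snd (fst p)) (snd p)), Tw k (snd (fst p)) (snd p))).
  assert (cga : cont (cyl (cyl B)) Y ga).
  { unfold ga. apply (cont_comp (cyl (cyl B)) (cyl (dpo i)) Y
      (fun p => (dpo_c i (fst (fst p), Tt (snd (fst p)) (snd p)), Tw k (snd (fst p)) (snd p))) G); auto.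
    apply (cont_pair (cyl (cyl B)) (dpo i) interval_space); auto.
    - apply (cont_comp (cyl (cyl B)) (cyl B) (dpo i) (fun p => (fst (fst p), Tt (snd (fst p)) (snd p))) (dpo_c i)); auto.
      apply (cont_pair (cyl (cyl B)) B interval_space); auto. apply cont_ff; auto.
      apply cont_Tt; auto. apply cont_sf; auto. apply cont_snd. apply cont_in2; auto.
    - apply cont_Tw; auto. apply cont_sf; auto. apply cont_snd. }
  assert (Ebg : forall b t, be (i b, t) = ga ((b, t), zero01)).
  { intros b t. unfold ga; simpl. destruct (Rle_dec (val t) (1/3)) as [h1|h1].
    - rewrite eL by auto. unfold bL; simpl. rewrite dpo_comm0. rewrite reg_left by auto. reflexivity.
    - destruct (Rle_dec (val t) (2/3)) as [h2|h2].
      + rewrite eM by (simpl; lra). unfold bM; simpl. rewrite Ec. rewrite reg_mid by lra. reflexivity.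
      + rewrite eR by (simpl; lra). unfold bR; simpl. rewrite dpo_comm1. rewrite reg_right by lra. reflexivity. }
  destruct (phep B A i PB PA Ci Y PY be ga cbe cga Ebg) as [K [cK [K1 K2]]].
  exists (fun p => K ((fst (fst p), Pt k (snd (fst p)) (snd p)), Pw k (snd (fst p)) (snd p))).
  split; [|split].
  - apply (cont_comp (cyl (cyl A)) (cyl (cyl A)) Y
      (fun p => ((fst (fst p), Pt k (snd (fst p)) (snd p)), Pw k (snd (fst p)) (snd p))) K); auto.
    apply (cont_pair (cyl (cyl A)) (cyl A) interval_space); auto.
    apply (cont_pair (cyl (cyl A)) A interval_space); auto. apply cont_ff; auto.
    apply cont_Pt; auto. apply cont_sf; auto. apply cont_snd.
    apply cont_Pw; auto. apply cont_sf; auto. apply cont_snd.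
  - intros [a t]. unfold ik; simpl. change (if k then one01 else zero01) with (kI k).
    rewrite (face k t (kI k)) by auto. rewrite K1. rewrite eM by (apply mid).
    unfold bM; simpl. pose proof (inv_t k t (kI k)) as It. rewrite (face k t (kI k)) in It by auto.
    rewrite It. reflexivity.
  - intros [p w]. unfold cyl_map; simpl. destruct (dpo_surj B A i p) as [[a ->]|[[[b s] ->]|[a ->]]].
    + rewrite dpo_j_a0. unfold ik; simpl. rewrite (face k zero01 w) by (left; reflexivity).
      rewrite K1. rewrite eL by (apply left_). unfold bL; simpl.
      pose proof (inv_w k zero01 w) as Iw. rewrite (face k zero01 w) in Iw by (left; reflexivity).
      rewrite Iw. reflexivity.
    + rewrite dpo_j_c. unfold cyl_map; simpl. rewrite K2. unfold ga; simpl.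
      rewrite inv_t, inv_w. reflexivity.
    + rewrite dpo_j_a1. unfold ik; simpl. rewrite (face k one01 w) by (right; left; reflexivity).
      rewrite K1. rewrite eR by (apply right_). unfold bR; simpl.
      pose proof (inv_w k one01 w) as Iw. rewrite (face k one01 w) in Iw by (right; left; reflexivity).
      rewrite Iw. reflexivity.
Qed.

From Stdlib Require Import Reals.
Theorem mainTheorem2 :
  (* (I, i0, i1, p) is a cylinder on PsTop *)
  (forall X : space, is_pstop X ->
     is_pstop (cyl X) /\ cont X (cyl X) (ik false) /\ cont X (cyl X) (ik true) /\
     cont (cyl X) X cylp /\
     (forall (k : bool) (x : pt X), cylp (ik k x) = x)) /\
  (forall (X Y : space) (f : pt X -> pt Y), is_pstop X -> is_pstop Y ->
     cont X Y f ->
     cont (cyl X) (cyl Y) (cyl_map f) /\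
     (forall (k : bool) (x : pt X), cyl_map f (ik k x) = ik k (f x)) /\
     (forall q : pt (cyl X), f (cylp q) = cylp (cyl_map f q))) /\
  (* ∅ is an initial object *)
  is_pstop empty_space /\ is_initial empty_space /\
  (* (1) cylinder axiom: I∅ = ∅ *)
  is_initial (cyl empty_space) /\
  (* (2) pushout axiom *)
  (forall (B A X : space) (i : pt B -> pt A) (f : pt B -> pt X),
     is_pstop B -> is_pstop A -> is_pstop X -> cof B A i -> cont B X f ->
     exists (P : space) (u : pt A -> pt P) (v : pt X -> pt P),
       is_pushout B A X P i f u v /\ cof X P v /\
       is_pushout (cyl B) (cyl A) (cyl X) (cyl P)
         (cyl_map i) (cyl_map f) (cyl_map u) (cyl_map v)) /\
  (* (3) cofibration axiom *)
  (forall (X Y : space) (f : pt X -> pt Y), is_pstop X -> is_pstop Y ->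
     is_iso X Y f -> cof X Y f) /\
  (forall X : space, is_pstop X -> cof empty_space X (empty_map X)) /\
  (forall (X Y Z : space) (f : pt X -> pt Y) (g : pt Y -> pt Z),
     is_pstop X -> is_pstop Y -> is_pstop Z ->
     cof X Y f -> cof Y Z g -> cof X Z (fun x => g (f x))) /\
  (forall (X Y : space) (f : pt X -> pt Y), is_pstop X -> is_pstop Y ->
     cof X Y f -> HEP X Y f) /\
  (* (4) interchange axiom *)
  (forall X : space, is_pstop X ->
     exists T : pt (cyl (cyl X)) -> pt (cyl (cyl X)),
       cont (cyl (cyl X)) (cyl (cyl X)) T /\
       forall k : bool,
         (forall q : pt (cyl X), T (ik k q) = cyl_map (ik k) q) /\
         (forall q : pt (cyl X), T (cyl_map (ik k) q) = ik k q)) /\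
  (* (5) relative cylinder axiom *)
  (forall (B A : space) (i : pt B -> pt A),
     is_pstop B -> is_pstop A -> cof B A i ->
     exists (P : space) (a0 : pt A -> pt P) (c : pt (cyl B) -> pt P)
            (a1 : pt A -> pt P),
       is_dpushout B A P i a0 c a1 /\
       exists j : pt P -> pt (cyl A),
         cont P (cyl A) j /\
         (forall a, j (a0 a) = ik false a) /\
         (forall q, j (c q) = cyl_map i q) /\
         (forall a, j (a1 a) = ik true a) /\
         cof P (cyl A) j).
Proof.
  split; [|split; [|split; [|split; [|split; [|split; [|split; [|split; [|split; [|split]]]]]]]]].
  - intros X PX. split; [apply cyl_pstop; auto|]. split; [apply cont_ik; auto|].
    split; [apply cont_ik; auto|]. split; [apply cont_cylp|]. reflexivity.
  - intros X Y f PX PY cf. split; [apply cont_cyl_map; auto|]. split; reflexivity.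
  - apply empty_pstop.
  - apply empty_initial.
  - apply cyl_empty_initial.
  - intros B A X i f PB PA PX Ci cf. exists (po i f), (po_u i f), (po_v i f).
    split; [apply po_pushout; auto|]. split; [apply po_v_cof; auto|]. apply po_cyl_pushout; auto.
  - apply iso_cof.
  - apply empty_cof.
  - apply comp_cof.
  - intros X Y f _ _ [_ H]; exact H.
  - split; [apply interchange|].
    intros B A i PB PA Ci. exists (dpo i), (dpo_a0 i), (dpo_c i), (dpo_a1 i).
    split; [apply dpo_dpushout; auto|]. exists (dpo_j i).
    split; [apply dpo_j_cont; auto; apply Ci|]. split; [apply dpo_j_a0|]. split; [apply dpo_j_c|].
    split; [apply dpo_j_a1|]. apply relcyl; auto.
Qed.
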